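(* Let $(T,\eta,(-)^\#,\sqsubseteq,\Uparrow)$ be a while-monad on $\mathbf{Set}$, $(\Omega,\le)$ a complete lattice and $o:T\Omega\to\Omega$ a meet-preserving Eilenberg–Moore $T$-algebra with $o(\bigsqcup_i c_i)=\bigwedge_i o(c_i)$ for every $\omega$-chain $(c_i)$ in $(T\Omega,\sqsubseteq_\Omega)$ and $o(\Uparrow_\Omega)=\top$. Let $(A,\le_A)$ be a complete lattice (with binary meets $\wedge_A$, joins $\vee_A$) and $\alpha:\mathcal P_\Omega(\mathbb M)\to A$, $\gamma:A\to\mathcal P_\Omega(\mathbb M)$ a Galois connection $\alpha\dashv\gamma$. Define $\llbracket-\rrbracket^\sharp$ on while programs by induction: $\llbracket\mathtt{skip}\rrbracket^\sharp=\mathrm{id}_A$, $\llbracket P;P'\rrbracket^\sharp=\llbracket P'\rrbracket^\sharp\circ\llbracket P\rrbracket^\sharp$, $\llbracket x:=e\rrbracket^\sharp=\alpha\circ sp^o(\llbracket x:=e\rrbracket)\circ\gamma$, $\llbracket\mathtt{if}\ b\ \{P_1\}\ \mathtt{else}\ \{P_2\}\rrbracket^\sharp=\lambda\phi.\ \llbracket P_1\rrbracket^\sharp(\phi\wedge_A\alpha(\mathrm{grd}_b^{\mathrm{tt}}))\vee_A\llbracket P_2\rrbracket^\sharp(\phi\wedge_A\alpha(\mathrm{grd}_b^{\mathrm{ff}}))$, and $\llbracket\mathtt{while}\ b\ \{P\}\rrbracket^\sharp=\mu\Theta$, the least fixpoint in the complete lattice of monotone maps $A\to A$ (pointwise order)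 of $\Theta(f)=\lambda\phi.\ f(\llbracket P\rrbracket^\sharp(\phi\wedge_A\alpha(\mathrm{grd}_b^{\mathrm{tt}})))\vee_A(\phi\wedge_A\alpha(\mathrm{grd}_b^{\mathrm{ff}}))$. Then $\llbracket-\rrbracket^\sharp$ is a functor $L_w\to\mathbf{Pos}$ (sending the unique object to $A$), and for every program $P$, $\alpha\circ\llbracket P\rrbracket^c\circ\gamma\le\llbracket P\rrbracket^\sharp$ pointwise.
   Context: Fix a set of values $\mathbb V$, a finite set of variables $X$, and memories $\mathbb M=\mathbb V^X$. Programs: $P::=\mathtt{skip}\mid P;P\mid x:=e\mid \mathtt{if}\ b\ \{P\}\ \mathtt{else}\ \{P\}\mid \mathtt{while}\ b\ \{P\}$; $L_w$ is the one-object category whose morphisms are programs, with composition given by sequencing $;$ (taken associative) and identity $\mathtt{skip}$ (with $\mathtt{skip};P=P;\mathtt{skip}=P$). Each condition $b$ has a given interpretation $\llbracket b\rrbracket:\mathbb M\to\{\mathrm{ff},\mathrm{tt}\}$. A while-monad on $\mathbf{Set}$ is a monad $(T,\eta,(-)^\#)$ on $\mathbf{Set}$ together with an $\omega$-cpo structure $(\sqsubseteq_X,\Uparrow_X)$ (least element $\Uparrow_X$, sups $\bigsqcup$ of $\omega$-chains) on each $TX$, such that, with $\sqsubseteq_{X,Y}$ the pointwise order on Kleisli maps $\mathbf{Set}_T(X,Y)=\mathbf{Set}(X,TY)$ and $\Uparrow_{X,Y}=\lambda x.\Uparrow_Y$: Kleisli composition $g\bullet f=g^\#\circ f$ is monotone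 and $\omega$-continuous in each argument, and $f\bullet\Uparrow_{X,Y}=\Uparrow_{X,Z}$. Monadic semantics: each assignment has a given $\llbracket x:=e\rrbracket\in\mathbf{Set}_T(\mathbb M,\mathbb M)$, and $\llbracket\mathtt{skip}\rrbracket_T=\eta_{\mathbb M}$, $\llbracket P;P'\rrbracket_T=\llbracket P'\rrbracket_T\bullet\llbracket P\rrbracket_T$, $\llbracket x:=e\rrbracket_T=\llbracket x:=e\rrbracket$, $\llbracket\mathtt{if}\ b\ \{P_1\}\ \mathtt{else}\ \{P_2\}\rrbracket_T=\lambda\rho.$ if $\llbracket b\rrbracket\rho=\mathrm{tt}$ then $\llbracket P_1\rrbracket_T(\rho)$ else $\llbracket P_2\rrbracket_T(\rho)$, $\llbracket\mathtt{while}\ b\ \{P\}\rrbracket_T=\mu\Phi$ (least fixpoint w.r.t. $\sqsubseteq_{\mathbb M,\mathbb M}$) with $\Phi(f)=\lambda\rho.$ if $\llbracket b\rrbracket\rho=\mathrm{tt}$ then $(f\bullet\llbracket P\rrbracket_T)(\rho)$ else $\eta_{\mathbb M}(\rho)$. $\mathcal P_\Omega(Y)=(\mathbf{Set}(Y,\Omega),\le_Y)$ with pointwise order. An Eilenberg–Moore algebra $o$ is meet-preserving if each $\phi\mapsto o\circ T\phi:\mathcal P_\Omega(Y)\to\mathcal P_\Omega(TY)$ preserves arbitrary meets. For $f\in\mathbf{Set}_T(Y,Z)$, $wp^o(f)(\phi)=o\circ T\phi\circ f$ and $sp^o(f)$ is the left adjoint of $wp^o(f)$. The collecting semantics is $\llbracket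 P\rrbracket^c=sp^o(\llbracket P\rrbracket_T):\mathcal P_\Omega(\mathbb M)\to\mathcal P_\Omega(\mathbb M)$. $\mathrm{grd}_b^v\in\mathcal P_\Omega(\mathbb M)$: $\mathrm{grd}_b^v(\rho)=\top$ if $\llbracket b\rrbracket\rho=v$, else $\bot$. A Galois connection $\alpha\dashv\gamma$ means $\alpha(\phi)\le_A a\iff\phi\le\gamma(a)$. *)

(* Defs.v *)
From mathcomp Require Import all_boot.
Set Implicit Arguments. Unset Strict Implicit. Unset Printing Implicit Defensive.

Record complete_lattice := CompleteLattice {
  cl_car :> Type;
  cl_le : cl_car -> cl_car -> Prop;
  cl_inf : (cl_car -> Prop) -> cl_car;
  cl_le_refl : forall x, cl_le x x;
  cl_le_trans : forall x y z, cl_le x y -> cl_le y z -> cl_le x z;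
  cl_le_antisym : forall x y, cl_le x y -> cl_le y x -> x = y;
  cl_inf_lb : forall (S : cl_car -> Prop) x, S x -> cl_le (cl_inf S) x;
  cl_inf_glb : forall (S : cl_car -> Prop) y,
      (forall x, S x -> cl_le y x) -> cl_le y (cl_inf S)
}.

Section LatticeOps.
Variable L : complete_lattice.
Definition cl_sup (S : L -> Prop) : L :=
  cl_inf (fun u => forall x, S x -> cl_le x u).
Definition cl_top : L := cl_inf (fun _ => False).
Definition cl_bot : L := cl_inf (fun _ => True).
Definition cl_meet (x y : L) : L := cl_inf (fun z => z = x \/ z = y).
Definition cl_join (x y : L) : L := cl_sup (fun z => z = x \/ z = y).
Definition cl_monotone (f : L -> L) : Prop :=
  forall x y, cl_le x y -> cl_le (f x) (f y).
End LatticeOps.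

(* Omega-valued predicates P_Omega(Y) = Set(Y, Omega), pointwise order/meets *)
Definition ple (Om : complete_lattice) (Y : Type) (phi psi : Y -> Om) : Prop :=
  forall y, cl_le (phi y) (psi y).
Definition pinf (Om : complete_lattice) (Y : Type) (S : (Y -> Om) -> Prop)
  : Y -> Om := fun y => cl_inf (fun w => exists phi, S phi /\ w = phi y).

(* wbind f = f^# (Kleisli extension); Kleisli composition g • f is     *)
(* fun x => wbind g (f x); Kleisli maps are ordered pointwise.         *)
(* wsup is the sup of omega-chains (its value on non-chains is junk).  *)
Record while_monad := WhileMonad {
  wT :> Type -> Type;
  wret : forall X : Type, X -> wT X;
  wbind : forall X Y : Type, (X -> wT Y) -> wT X -> wT Y;
  wle : forall X : Type, wT X -> wT X -> Prop;
  wbot : forall X : Type, wT X;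
  wsup : forall X : Type, (nat -> wT X) -> wT X;
  wbind_ret_l : forall X Y (f : X -> wT Y) x, wbind f (wret x) = f x;
  wbind_ret_r : forall X (m : wT X), wbind (@wret X) m = m;
  wbind_assoc : forall X Y Z (f : X -> wT Y) (g : Y -> wT Z) (m : wT X),
      wbind g (wbind f m) = wbind (fun x => wbind g (f x)) m;
  wle_refl : forall X (t : wT X), wle t t;
  wle_trans : forall X (t u v : wT X), wle t u -> wle u v -> wle t v;
  wle_antisym : forall X (t u : wT X), wle t u -> wle u t -> t = u;
  wbot_least : forall X (t : wT X), wle (wbot X) t;
  wsup_ub : forall X (c : nat -> wT X), (forall n, wle (c n) (c n.+1)) ->
      forall n, wle (c n) (wsup c);
  wsup_least : forall X (c : nat -> wT X) (t : wT X),
      (forall n, wle (c n) (c n.+1)) -> (forall n, wle (c n) t) -> wle (wsup c) t;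
  wkl_mono_l : forall X Y Z (f : X -> wT Y) (g g' : Y -> wT Z),
      (forall y, wle (g y) (g' y)) -> forall x, wle (wbind g (f x)) (wbind g' (f x));
  wkl_mono_r : forall X Y Z (f f' : X -> wT Y) (g : Y -> wT Z),
      (forall x, wle (f x) (f' x)) -> forall x, wle (wbind g (f x)) (wbind g (f' x));
  wkl_cont_l : forall X Y Z (f : X -> wT Y) (gs : nat -> Y -> wT Z),
      (forall n y, wle (gs n y) (gs n.+1 y)) ->
      forall x, wbind (fun y => wsup (fun n => gs n y)) (f x)
                = wsup (fun n => wbind (gs n) (f x));
  wkl_cont_r : forall X Y Z (fs : nat -> X -> wT Y) (g : Y -> wT Z),
      (forall n x, wle (fs n x) (fs n.+1 x)) ->
      forall x, wbind g (wsup (fun n => fs n x))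
                = wsup (fun n => wbind g (fs n x));
  wkl_strict : forall X Y Z (f : Y -> wT Z) (x : X),
      wbind f ((fun _ : X => wbot Y) x) = wbot Z
}.

Arguments wret {w X}.
Arguments wbind {w X Y}.
Arguments wle {w X}.
Arguments wbot {w}.
Arguments wsup {w X}.

Definition fmap (W : while_monad) (X Y : Type) (f : X -> Y) : W X -> W Y :=
  wbind (fun x => wret (f x)).

Inductive prog (Var Expr BExpr : Type) : Type :=
  | Skip
  | Seq of prog Var Expr BExpr & prog Var Expr BExpr
  | Assign of Var & Expr
  | If of BExpr & prog Var Expr BExpr & prog Var Expr BExpr
  | While of BExpr & prog Var Expr BExpr.

Arguments Skip {Var Expr BExpr}.

Definition memory (V : Type) (Var : finType) : Type := Var -> V.

Definition klfp (W : while_monad) (Y Z : Type)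
  (Phi : (Y -> W Z) -> (Y -> W Z)) : Y -> W Z :=
  fun y => wsup (fun n => iter n Phi (fun _ => wbot Z) y).

Fixpoint csem (W : while_monad) (V : Type) (Var : finType) (Expr BExpr : Type)
  (asg : Var -> Expr -> memory V Var -> W (memory V Var))
  (bsem : BExpr -> memory V Var -> bool)
  (P : prog Var Expr BExpr) : memory V Var -> W (memory V Var) :=
  match P with
  | Skip => fun rho => wret rho
  | Seq P1 P2 => fun rho => wbind (csem asg bsem P2) (csem asg bsem P1 rho)
  | Assign x e => asg x e
  | If b P1 P2 => fun rho => if bsem b rho then csem asg bsem P1 rho
                             else csem asg bsem P2 rho
  | While b P1 => klfp (fun f rho => if bsem b rho
                                     then wbind f (csem asg bsem P1 rho)
                                     else wret rho)
  end.

Definition wp (W : while_monad) (Om : complete_lattice) (o : W Om -> Om)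
  (Y Z : Type) (f : Y -> W Z) (phi : Z -> Om) : Y -> Om :=
  fun y => o (fmap phi (f y)).

(* sp^o(f) = the left adjoint of wp^o(f), given by the standard formula
   sp(f)(psi) = /\ { phi | psi <= wp(f)(phi) } (pointwise meet). *)
Definition sp (W : while_monad) (Om : complete_lattice) (o : W Om -> Om)
  (Y Z : Type) (f : Y -> W Z) (psi : Y -> Om) : Z -> Om :=
  pinf (fun phi => ple psi (wp o f phi)).

Definition grd (Om : complete_lattice) (V : Type) (Var : finType) (BExpr : Type)
  (bsem : BExpr -> memory V Var -> bool) (b : BExpr) (v : bool) : memory V Var -> Om :=
  fun rho => if bsem b rho == v then cl_top Om else cl_bot Om.

Fixpoint asem (W : while_monad) (Om : complete_lattice) (o : W Om -> Om)
  (V : Type) (Var : finType) (Expr BExpr : Type)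
  (asg : Var -> Expr -> memory V Var -> W (memory V Var))
  (bsem : BExpr -> memory V Var -> bool)
  (A : complete_lattice) (alpha : (memory V Var -> Om) -> A)
  (gamma : A -> (memory V Var -> Om))
  (P : prog Var Expr BExpr) : A -> A :=
  let atrue b := alpha (grd Om bsem b true) in
  let afalse b := alpha (grd Om bsem b false) in
  match P with
  | Skip => fun a => a
  | Seq P1 P2 => fun a => asem o asg bsem alpha gamma P2
                            (asem o asg bsem alpha gamma P1 a)
  | Assign x e => fun a => alpha (sp o (asg x e) (gamma a))
  | If b P1 P2 => fun a =>
      cl_join (asem o asg bsem alpha gamma P1 (cl_meet a (atrue b)))
              (asem o asg bsem alpha gamma P2 (cl_meet a (afalse b)))
  | While b P1 =>
      let Theta (f : A -> A) : A -> A := fun a =>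
        cl_join (f (asem o asg bsem alpha gamma P1 (cl_meet a (atrue b))))
                (cl_meet a (afalse b)) in
      (* least fixpoint in the complete lattice of monotone maps A -> A
         (Knaster-Tarski: meet of all monotone pre-fixpoints; meets of
         monotone maps are computed pointwise) *)
      fun a => cl_inf (fun w => exists f : A -> A,
                 [/\ cl_monotone f, (forall a', cl_le (Theta f a') (f a')) & w = f a])
  end.

(* Main.v *)
Require Import Defs.
From mathcomp Require Import all_boot.
From Stdlib Require Import FunctionalExtensionality.
Set Implicit Arguments. Unset Strict Implicit.

Lemma meet_l (L : complete_lattice) (x y : L) : cl_le (cl_meet x y) x.
Proof. apply: cl_inf_lb; by left. Qed.
Lemma meet_r (L : complete_lattice) (x y : L) : cl_le (cl_meet x y) y.
Proof. apply: cl_inf_lb; by right. Qed.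
Lemma meet_glb (L : complete_lattice) (x y z : L) :
  cl_le z x -> cl_le z y -> cl_le z (cl_meet x y).
Proof. move=> H1 H2; apply: cl_inf_glb => w [->|->] //. Qed.
Lemma join_l (L : complete_lattice) (x y : L) : cl_le x (cl_join x y).
Proof. apply: cl_inf_glb => u Hu; apply: Hu; by left. Qed.
Lemma join_r (L : complete_lattice) (x y : L) : cl_le y (cl_join x y).
Proof. apply: cl_inf_glb => u Hu; apply: Hu; by right. Qed.
Lemma join_lub (L : complete_lattice) (x y u : L) :
  cl_le x u -> cl_le y u -> cl_le (cl_join x y) u.
Proof. move=> H1 H2; apply: cl_inf_lb => z [->|->] //. Qed.
Lemma bot_le (L : complete_lattice) (x : L) : cl_le (cl_bot L) x.
Proof. by apply: cl_inf_lb. Qed.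
Lemma le_top (L : complete_lattice) (x : L) : cl_le x (cl_top L).
Proof. by apply: cl_inf_glb. Qed.

Lemma fmap_fmap (W : while_monad) X Y Z (f : X -> Y) (g : Y -> Z) (m : W X) :
  fmap g (fmap f m) = fmap (fun x => g (f x)) m.
Proof.
rewrite /fmap wbind_assoc; f_equal; apply: functional_extensionality => x.
by rewrite wbind_ret_l.
Qed.

Lemma wp_bind (W : while_monad) (Om : complete_lattice)
  (o : wT W (cl_car Om) -> cl_car Om)
  (o_mult : forall m : wT W (wT W (cl_car Om)),
      o (wbind (fun t => t) m) = o (fmap o m))
  Y U (g : Y -> W U) (m : W Y) (phi : U -> Om) :
  o (fmap phi (wbind g m)) = o (fmap (fun z => o (fmap phi (g z))) m).
Proof.
have E1: fmap phi (wbind g m) = wbind (fun z => fmap phi (g z)) m.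
  by rewrite /fmap wbind_assoc.
rewrite E1 -(@fmap_fmap _ _ _ _ (fun z => fmap phi (g z)) o) -o_mult /fmap wbind_assoc.
f_equal; f_equal; apply: functional_extensionality => x.
by rewrite wbind_ret_l.
Qed.

Lemma wp_mono (W : while_monad) (Om : complete_lattice)
  (o : wT W (cl_car Om) -> cl_car Om)
  (o_meet : forall (Y : Type) (S : (Y -> cl_car Om) -> Prop) (t : wT W Y),
      o (fmap (pinf S) t) = cl_inf (fun w => exists phi, S phi /\ w = o (fmap phi t)))
  Y Z (f : Y -> W Z) (phi phi' : Z -> Om) :
  ple phi phi' -> ple (wp o f phi) (wp o f phi').
Proof.
move=> H y.
have E: pinf (fun psi => psi = phi \/ psi = phi') = phi.
  apply: functional_extensionality => z; apply: cl_le_antisym.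
    apply: cl_inf_lb; exists phi; split => //; by left.
  apply: cl_inf_glb => w [psi [[->|->] ->]]; [apply: cl_le_refl | apply: H].
rewrite /wp -{1}E o_meet; apply: cl_inf_lb; exists phi'; split => //; by right.
Qed.

Lemma sp_wp_le (W : while_monad) (Om : complete_lattice)
  (o : wT W (cl_car Om) -> cl_car Om)
  (o_meet : forall (Y : Type) (S : (Y -> cl_car Om) -> Prop) (t : wT W Y),
      o (fmap (pinf S) t) = cl_inf (fun w => exists phi, S phi /\ w = o (fmap phi t)))
  Y Z (f : Y -> W Z) (psi : Y -> Om) :
  ple psi (wp o f (sp o f psi)).
Proof.
move=> y; rewrite /wp /sp o_meet; apply: cl_inf_glb => w [phi [Hphi ->]].
exact: Hphi.
Qed.

Lemma sp_le (W : while_monad) (Om : complete_lattice)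
  (o : wT W (cl_car Om) -> cl_car Om)
  Y Z (f : Y -> W Z) (psi : Y -> Om) phi :
  ple psi (wp o f phi) -> ple (sp o f psi) phi.
Proof. move=> H y; apply: cl_inf_lb; by exists phi. Qed.

Lemma lfp_props (A : complete_lattice) (Th : (A -> A) -> A -> A)
  (Thmono : forall f g : A -> A, (forall x, cl_le (f x) (g x)) ->
       forall x, cl_le (Th f x) (Th g x)) :
  let S := fun a => cl_inf (fun w => exists f : A -> A,
      [/\ cl_monotone f, (forall a', cl_le (Th f a') (f a')) & w = f a]) in
  cl_monotone S /\ forall a, cl_le (Th S a) (S a).
Proof.
move=> S; split.
  move=> x y Hxy; apply: cl_inf_glb => w [f [Hf Hp ->]].
  apply: cl_le_trans (Hf _ _ Hxy); apply: cl_inf_lb; by exists f.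
move=> a; apply: cl_inf_glb => w [f [Hf Hp ->]].
apply: cl_le_trans (Hp a); apply: Thmono => x.
apply: cl_inf_lb; by exists f.
Qed.

Theorem mainTheorem6 (W : while_monad) (Om : complete_lattice)
  (o : wT W (cl_car Om) -> cl_car Om)
  (* o is an Eilenberg-Moore T-algebra *)
  (o_unit : forall w : cl_car Om, o (wret w) = w)
  (o_mult : forall m : wT W (wT W (cl_car Om)),
      o (wbind (fun t => t) m) = o (fmap o m))
  (* o is meet-preserving *)
  (o_meet : forall (Y : Type) (S : (Y -> cl_car Om) -> Prop) (t : wT W Y),
      o (fmap (pinf S) t) = cl_inf (fun w => exists phi, S phi /\ w = o (fmap phi t)))
  (* o maps sups of omega-chains to meets, and ⇑ to top *)
  (o_sup : forall c : nat -> wT W (cl_car Om), (forall n, wle (c n) (c n.+1)) ->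
      o (wsup c) = cl_inf (fun w => exists n, w = o (c n)))
  (o_bot : o (wbot (cl_car Om)) = cl_top Om)
  (V : Type) (Var : finType) (Expr BExpr : Type)
  (asg : Var -> Expr -> memory V Var -> wT W (memory V Var))
  (bsem : BExpr -> memory V Var -> bool)
  (A : complete_lattice)
  (alpha : (memory V Var -> cl_car Om) -> cl_car A)
  (gamma : cl_car A -> (memory V Var -> cl_car Om))
  (galois : forall phi a, cl_le (alpha phi) a <-> ple phi (gamma a)) :
  let sharp := asem o asg bsem alpha gamma in
  (* [[-]]^# is a functor L_w -> Pos *)
  ((forall P : prog Var Expr BExpr, cl_monotone (sharp P))
   /\ sharp Skip = (fun a => a)
   /\ (forall P P' : prog Var Expr BExpr, sharp (Seq P P') = (fun a => sharp P' (sharp P a))))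
  /\
  (* soundness: alpha ∘ [[P]]^c ∘ gamma <= [[P]]^# pointwise *)
  (forall (P : prog Var Expr BExpr) (a : cl_car A),
      cl_le (alpha (sp o (csem asg bsem P) (gamma a))) (sharp P a)).
Proof.
Proof.
move=> sharp.
have gmono : forall a a', cl_le a a' -> ple (gamma a) (gamma a').
  move=> a a' H; apply/galois; apply: cl_le_trans H; by apply/galois => y; apply: cl_le_refl.
have amono : forall phi phi' : memory V Var -> cl_car Om, ple phi phi' -> cl_le (alpha phi) (alpha phi').
  move=> phi phi' H; apply/galois => y; apply: cl_le_trans (H y) _.
  exact: (proj1 (galois _ _) (cl_le_refl _)).
have guard : forall b (v : bool) a rho, bsem b rho = v ->
    cl_le (gamma a rho) (gamma (cl_meet a (alpha (grd Om bsem b v))) rho).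
  move=> b v a rho Hb.
  pose phi' := fun r => if bsem b r == v then gamma a r else cl_bot Om.
  have H1: ple phi' (gamma (cl_meet a (alpha (grd Om bsem b v)))).
    apply/galois; apply: meet_glb.
      apply/galois => r; rewrite /phi'; case: eqP => _;
        [apply: cl_le_refl | apply: bot_le].
    apply: amono => r; rewrite /phi' /grd; case: eqP => _;
      [apply: le_top | apply: cl_le_refl].
  by have := H1 rho; rewrite /phi' Hb eqxx.
have Ptrans : forall (x y z : cl_car Om), cl_le x y -> cl_le y z -> cl_le x z.
  exact: cl_le_trans.
split.
split; last by split.
elim => [|P1 IH1 P2 IH2|xv e|b P1 IH1 P2 IH2|b P1 IH1].
- by move=> x y H.
- move=> x y H /=; apply: IH2; exact: IH1.
- move=> x y H; apply: amono; apply: sp_le => z.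
  exact: cl_le_trans (gmono _ _ H z) (sp_wp_le o_meet _ _ z).
- move=> x y H /=; apply: join_lub.
    apply: cl_le_trans _ (join_l _ _); apply: IH1.
    apply: meet_glb; [exact: cl_le_trans (meet_l _ _) H | exact: meet_r].
  apply: cl_le_trans _ (join_r _ _); apply: IH2.
  apply: meet_glb; [exact: cl_le_trans (meet_l _ _) H | exact: meet_r].
- pose Th := fun (f : A -> A) a => cl_join (f (sharp P1 (cl_meet a (alpha (grd Om bsem b true)))))
        (cl_meet a (alpha (grd Om bsem b false))).
  have Thmono : forall f g : A -> A, (forall x, cl_le (f x) (g x)) ->
     forall x, cl_le (Th f x) (Th g x).
    move=> f g Hfg x; apply: join_lub.
      apply: cl_le_trans (Hfg _) _; apply: join_l.
    apply: join_r.
  have [HM _] := lfp_props Thmono.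
  exact: HM.
have key : forall P a, ple (gamma a) (wp o (csem asg bsem P) (gamma (sharp P a))).
  elim => [|P1 IH1 P2 IH2|x e|b P1 IH1 P2 IH2|b P1 IH1] a.
  - move=> y; rewrite /wp /= /fmap wbind_ret_l o_unit; apply: cl_le_refl.
  - move=> y; apply: cl_le_trans (IH1 a y) _.
    apply: cl_le_trans (wp_mono o_meet _ (IH2 (sharp P1 a)) y) _.
    by rewrite /wp /= (wp_bind o_mult); apply: cl_le_refl.
  - move=> y; apply: cl_le_trans (sp_wp_le o_meet _ _ y) _.
    apply: wp_mono => // z; exact: (proj1 (galois _ _) (cl_le_refl _) z).
  - move=> y; rewrite /wp /=; case Hb: (bsem b y).
      apply: cl_le_trans (guard b true a y Hb) _.
      apply: cl_le_trans (IH1 _ y) _.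
      apply: (wp_mono o_meet _ _ y) => z; apply: gmono; apply: join_l.
    apply: cl_le_trans (guard b false a y Hb) _.
    apply: cl_le_trans (IH2 _ y) _.
    apply: (wp_mono o_meet _ _ y) => z; apply: gmono; apply: join_r.
  - pose c1 := csem asg bsem P1.
    pose Th := fun (f : A -> A) a => cl_join (f (sharp P1 (cl_meet a (alpha (grd Om bsem b true)))))
        (cl_meet a (alpha (grd Om bsem b false))).
    have Thmono : forall f g : A -> A, (forall x, cl_le (f x) (g x)) ->
       forall x, cl_le (Th f x) (Th g x).
      move=> f g Hfg x; apply: join_lub.
        apply: cl_le_trans (Hfg _) _; apply: join_l.
      apply: join_r.
    have [_ HS] := lfp_props Thmono.
    pose S := sharp (While b P1).
    have HS' : forall a, cl_le (Th S a) (S a) := HS.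
    pose Phi := fun (f : memory V Var -> W (memory V Var)) rho =>
      if bsem b rho then wbind f (c1 rho) else wret rho.
    pose fs := fun n => iter n Phi (fun _ => wbot (memory V Var)).
    have chain : forall n x, wle (fs n x) (fs n.+1 x).
      elim => [|n IHn] x; first exact: wbot_least.
      rewrite /fs /= -/(fs n) -/(fs n.+1) /Phi; case: (bsem b x).
        exact: wkl_mono_l.
      exact: wle_refl.
    have Hn : forall n a, ple (gamma a) (wp o (fs n) (gamma (S a))).
      elim => [|n IHn] a' rho.
        rewrite /wp /fs /= /fmap (@wkl_strict _ unit _ _ _ tt) o_bot; exact: le_top.
      rewrite /wp /fs /= -/(fs n) /Phi; case Hb: (bsem b rho).
        rewrite (wp_bind o_mult).
        apply: cl_le_trans (guard b true a' rho Hb) _.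
        apply: cl_le_trans (IH1 _ rho) _.
        apply: (wp_mono o_meet _ _ rho) => z.
        apply: cl_le_trans (IHn _ z) _.
        apply: (wp_mono o_meet _ _ z) => z'.
        apply: gmono; apply: cl_le_trans (HS' a'); apply: join_l.
      rewrite /fmap wbind_ret_l o_unit.
      apply: cl_le_trans (guard b false a' rho Hb) _.
      apply: gmono; apply: cl_le_trans (HS' a'); apply: join_r.
    move=> y.
    change (cl_le (gamma a y) (o (fmap (gamma (S a)) (wsup (fun n => fs n y))))).
    rewrite /fmap (wkl_cont_r _ chain) o_sup.
      apply: cl_inf_glb => w [n ->]; exact: Hn n a y.
    move=> n; apply: wkl_mono_r; exact: chain.
move=> P a; apply/galois; apply: sp_le; exact: key.
Qed.
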